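(* Let $W$ be a discrete memoryless channel with finite input alphabet $\mathcal{X}$ and finite output alphabet $\mathcal{Y}$, with reliability function $E(R)$ and with $\vartheta(\rho)$ as defined in the context. Then for every $\rho\ge 1$, $$E(R)\le 2\rho\,\vartheta(\rho)\qquad\text{for all } R>\vartheta(\rho),$$ and if the channel is pairwise reversible, then moreover $E(R)\le\rho\,\vartheta(\rho)$ for all $R>\vartheta(\rho)$.
   Context: $W(y|x)$ are the transition probabilities; $W^{(n)}(\bm{y}|\bm{x})=\prod_{i=1}^n W(y_i|x_i)$. A code of block-length $n$ is a set of $M$ codewords $\bm{x}_1,\ldots,\bm{x}_M\in\mathcal{X}^n$ with rate $R=\frac{1}{n}\log M$ (natural log); a decoder partitions $\mathcal{Y}^n$ into decoding sets $Y_1,\ldots,Y_M$; the error probability for message $m$ is $P_{e|m}=\sum_{\bm{y}\notin Y_m}W^{(n)}(\bm{y}|\bm{x}_m)$ and $P_{e,\max}=\max_m P_{e|m}$. $P^{(n)}_{e,\max}(R)$ is the smallest $P_{e,\max}$ over all codes (and decoders) of length $n$ and rate at least $R$, and the reliability function is $E(R)=\limsup_{n\to\infty}-\frac1n\log P^{(n)}_{e,\max}(R)$ (taken to be $+\infty$ when the error probability can be made zero). State vectors: $\bm{\psi}_x\in\mathbb{R}^{|\mathcal{Y}|}$ with $\bm{\psi}_x(y)=\sqrt{W(y|x)}$, so $\langle\bm{\psi}_x,\bm{\psi}_{x'}\rangle=\sum_y\sqrt{W(y|x)W(y|x')}$. For $\rho\ge1$, an orthonormal representation of degree $\rho$ is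 a family $\{\tilde{\bm{\psi}}_x\}_{x\in\mathcal{X}}$ of unit-norm vectors in some Hilbert space with $|\langle\tilde{\bm{\psi}}_x,\tilde{\bm{\psi}}_{x'}\rangle|\le(\langle\bm{\psi}_x,\bm{\psi}_{x'}\rangle)^{1/\rho}$ for all $x,x'$; $\Gamma(\rho)$ is the set of all such representations; $V(\{\tilde{\bm{\psi}}_x\})=\min_{\bm{f}}\max_x\log\frac{1}{|\langle\tilde{\bm{\psi}}_x,\bm{f}\rangle|^2}$ over unit vectors $\bm{f}$; and $\vartheta(\rho)=\min_{\{\tilde{\bm{\psi}}_x\}\in\Gamma(\rho)}V(\{\tilde{\bm{\psi}}_x\})$. The channel is called pairwise reversible if for every pair of inputs $x,x'$ the function $s\mapsto\sum_y W(y|x)^{1-s}W(y|x')^{s}$ on $[0,1]$ attains its minimum at $s=1/2$. *)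

(* Defs.v *)
From HB Require Import structures.
From mathcomp Require Import all_boot all_order all_algebra.
From mathcomp Require Import all_classical all_reals all_analysis.
Set Implicit Arguments. Unset Strict Implicit. Unset Printing Implicit Defensive.
Import Order.TTheory GRing.Theory Num.Theory.
Local Open Scope classical_set_scope.
Local Open Scope ring_scope.

Section Channel.
Variables (R : realType) (X Y : finType).

(* A DMC: W x y = W(y|x). *)
Definition is_channel (W : X -> Y -> R) : Prop :=
  (forall x y, 0 <= W x y) /\ (forall x, \sum_(y : Y) W x y = 1).

Definition Wn (W : X -> Y -> R) n (x : {ffun 'I_n -> X}) (y : {ffun 'I_n -> Y}) : R :=
  \prod_(i < n) W (x i) (y i).

(* error probability of message m for codebook c and decoder dec
   (the decoding sets are Y_m = dec^-1 {m}) *)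
Definition Pe_m (W : X -> Y -> R) n M (c : 'I_M -> {ffun 'I_n -> X})
  (dec : {ffun 'I_n -> Y} -> 'I_M) (m : 'I_M) : R :=
  \sum_(y : {ffun 'I_n -> Y} | dec y != m) Wn W (c m) y.

Definition Pe_max (W : X -> Y -> R) n M (c : 'I_M -> {ffun 'I_n -> X})
  (dec : {ffun 'I_n -> Y} -> 'I_M) : R :=
  \big[Num.max/0]_(m < M) Pe_m W c dec m.

Definition Pemax_opt (W : X -> Y -> R) (n : nat) (Rt : R) : R :=
  inf [set p : R | exists M : nat, exists (c : 'I_M -> {ffun 'I_n -> X})
        (dec : {ffun 'I_n -> Y} -> 'I_M),
        (0 < M)%N /\ Rt <= ln (M%:R) / n%:R /\ p = Pe_max W c dec].

Definition reliability (W : X -> Y -> R) (Rt : R) : \bar R :=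
  limn_esup (fun n : nat =>
    if Pemax_opt W n Rt == 0 then +oo%E
    else ((- ln (Pemax_opt W n Rt)) / n%:R)%:E).

Definition bhatt (W : X -> Y -> R) (x x' : X) : R :=
  \sum_(y : Y) Num.sqrt (W x y * W x' y).

Definition dotv d (u v : 'I_d -> R) : R := \sum_(i < d) u i * v i.

Definition ortho_rep (W : X -> Y -> R) (rho : R) d (psi : X -> 'I_d -> R) : Prop :=
  (forall x, dotv (psi x) (psi x) = 1) /\
  (forall x x', `|dotv (psi x) (psi x')| <= (bhatt W x x') `^ (rho^-1)).

Definition loginvsq (a : R) : \bar R :=
  if a == 0 then +oo%E else (- ln (a ^+ 2))%:E.

Definition Vrep d (psi : X -> 'I_d -> R) : \bar R :=
  ereal_inf [set v | exists f : 'I_d -> R, dotv f f = 1 /\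
     v = \big[Order.max/-oo%E]_(x : X) loginvsq (dotv (psi x) f)].

Definition vartheta (W : X -> Y -> R) (rho : R) : \bar R :=
  ereal_inf [set v | exists d : nat, exists psi : X -> 'I_d -> R,
     ortho_rep W rho psi /\ v = Vrep psi].

Definition pairwise_reversible (W : X -> Y -> R) : Prop :=
  forall x x' : X, forall s : R, 0 <= s <= 1 ->
    \sum_(y : Y) (W x y) `^ (1 - 2^-1) * (W x' y) `^ (2^-1)
    <= \sum_(y : Y) (W x y) `^ (1 - s) * (W x' y) `^ s.

End Channel.

(* Main.v *)
Require Import Defs.
From HB Require Import structures.
From mathcomp Require Import all_boot all_order all_algebra.
From mathcomp Require Import all_classical all_reals all_analysis.
From mathcomp Require Import ring lra.
Import Order.TTheory GRing.Theory Num.Theory.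

Module M1.
Unset Implicit Arguments.
Local Open Scope ring_scope.

Section L1.
Variable R : realType.

Lemma limsup_le (u : nat -> \bar R) (b : R) :
  (forall e : R, 0 < e -> exists N : nat, forall n, (N <= n)%N -> (u n <= (b + e)%:E)%E) ->
  (limn_esup u <= b%:E)%E.
Proof.
move=> H.
have -> : limn_esup u = ereal_inf (range (esups u)).
  rewrite limn_esup_lim; apply/cvg_lim => //; exact: cvg_esups_inf.
apply/lee_addgt0Pr => e e0.
have [N HN] := H e e0.
apply: ge_ereal_inf; exists (esups u N); first by exists N.
rewrite /esups /=; apply/ereal_supP => y [k /= Hk <-].
by rewrite -EFinD; apply: HN; exact: Hk.
Qed.
End L1.

End M1.
Import M1.

Module M2.
Unset Implicit Arguments.
Local Open Scope ring_scope.

Section L2.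
Variable R : realType.

Lemma CS (J : finType) (u v : J -> R) :
  (\sum_j u j * v j) ^+ 2 <= (\sum_j u j ^+ 2) * (\sum_j v j ^+ 2).
Proof.
set A := \sum_j u j ^+ 2; set B := \sum_j v j ^+ 2; set C := \sum_j u j * v j.
have B0 : 0 <= B by apply: sumr_ge0 => j _; exact: sqr_ge0.
have A0 : 0 <= A by apply: sumr_ge0 => j _; exact: sqr_ge0.
case: (ltgtP B 0) => [|Bp|Be]; first by rewrite ltNge B0.
  have key : 0 <= \sum_j (u j * B - C * v j) ^+ 2 by apply: sumr_ge0 => j _; exact: sqr_ge0.
  have e : \sum_j (u j * B - C * v j) ^+ 2 = B ^+ 2 * A - 2 * B * C * C + C ^+ 2 * B.
    rewrite (eq_bigr (fun j => B ^+ 2 * u j ^+ 2 - (2 * B * C) * (u j * v j) + C ^+ 2 * v j ^+ 2)); last by move=> j _; ring.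
    by rewrite big_split /= sumrB -!mulr_sumr.
  rewrite e in key.
  have : 0 <= B * (A * B - C ^+ 2) by rewrite mulrBr; lra.
  by rewrite pmulr_rge0 // subr_ge0 mulrC.
have v0 : forall j, v j = 0.
  move=> j; apply/eqP; rewrite -sqrf_eq0; apply/eqP.
  by move: Be => /eqP; rewrite psumr_eq0 => [/allP/(_ j (mem_index_enum j))/implyP/(_ isT)/eqP|i _]; [|exact: sqr_ge0].
have -> : C = 0 by rewrite /C big1 // => j _; rewrite v0 mulr0.
by rewrite expr0n /= mulr_ge0.
Qed.

Lemma exp_quad (x : R) : x <= 2^-1 -> expR x <= 1 + x + 2 * x ^+ 2.
Proof.
move=> hx.
have h1 := expR_ge1Dx (- x).
have e : expR x * expR (- x) = 1 by rewrite -expRD subrr expR0.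
have Ep := expR_gt0 x.
set q := 1 + x + 2 * x ^+ 2.
have q1 : 1 <= q * (1 - x).
  have : 0 <= x ^+ 2 * (1 - 2 * x) by apply: mulr_ge0; [exact: sqr_ge0|lra].
  rewrite /q; move=> h; nra.
have q0 : 0 <= q by rewrite /q; nra.
have : expR x <= expR x * (q * (1 - x)) by rewrite ler_peMr // ltW.
move=> h; apply: (le_trans h).
have h2 : q * (1 - x) <= q * expR (- x) by rewrite ler_wpM2l //; lra.
apply: (le_trans (ler_wpM2l (ltW Ep) h2)).
by rewrite mulrCA e mulr1.
Qed.

Lemma tensor (I J : finType) (p q : I -> J -> R) :
  \sum_(j : {ffun I -> J}) (\prod_i p i (j i)) * (\prod_i q i (j i)) =
  \prod_i \sum_j p i j * q i j.
Proof.
rewrite bigA_distr_bigA; apply: eq_bigr => j _; by rewrite -big_split.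
Qed.

End L2.

End M2.
Import M2.

Module M3.
Unset Implicit Arguments.
Local Open Scope ring_scope.

Section L3.
Variable R : realType.

Lemma gram (J : finType) (M : nat) (Psi : 'I_M -> J -> R) (F : J -> R) (a : R) :
  \sum_j F j ^+ 2 = 1 -> (forall m, \sum_j Psi m j ^+ 2 = 1) ->
  (forall m, a <= (\sum_j Psi m j * F j) ^+ 2) -> 1 < M%:R * a ->
  exists m m' : 'I_M, m != m' /\ a - M%:R^-1 <= `|\sum_j Psi m j * Psi m' j|.
Proof.
move=> HF HP Ha HM.
set Mr : R := M%:R.
have HM' : 1 < Mr * a by [].
clear HM; rename HM' into HM.
have Mr0 : 0 <= Mr by rewrite /Mr ler0n.
have a0 : 0 < a by rewrite ltNge; apply/negP => a0; move: HM; rewrite ltNge => /negP; apply; nra.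
have Mp : 0 < Mr by rewrite lt_neqAle Mr0 andbT; apply/negP => /eqP E; move: HM; rewrite -E mul0r ltr10.
set g := fun m => \sum_j Psi m j * F j.
set s := fun m => if 0 <= g m then 1 else -1 : R.
have hs : forall m, s m * g m = `|g m|.
  move=> m; rewrite /s; case: ifP => h; first by rewrite mul1r ger0_norm.
  by rewrite ltr0_norm ?mulN1r // ltNge h.
have hs2 : forall m, s m * s m = 1 by move=> m; rewrite /s; case: ifP => _; rewrite ?mulrNN mulr1.
set G := fun m m' => \sum_j Psi m j * Psi m' j.
set u := fun j => \sum_m s m * Psi m j.
have e1 : \sum_j u j * F j = \sum_m `|g m|.
  rewrite /u; under eq_bigr do rewrite mulr_suml.
  rewrite exchange_big /=; apply: eq_bigr => m _.
  by rewrite -hs /g mulr_sumr; apply: eq_bigr => j _; rewrite mulrA.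
have e2 : \sum_j u j ^+ 2 = \sum_m \sum_m' s m * s m' * G m m'.
  rewrite /u; under eq_bigr do rewrite expr2 big_distrlr /=.
  rewrite exchange_big /=; apply: eq_bigr => m _.
  rewrite exchange_big /=; apply: eq_bigr => m' _.
  by rewrite /G mulr_sumr; apply: eq_bigr => j _; ring.
have sa : forall m, Num.sqrt a <= `|g m|.
  by move=> m; rewrite -sqrtr_sqr ler_sqrt //; [exact: Ha|exact: sqr_ge0].
have e3 : Mr * Num.sqrt a <= \sum_m `|g m|.
  have -> : Mr * Num.sqrt a = \sum_(m < M) Num.sqrt a by rewrite sumr_const card_ord mulr_natl.
  by apply: ler_sum => m _; exact: sa.
have e4 : Mr ^+ 2 * a <= \sum_j u j ^+ 2.
  have h := @CS R J u F; rewrite HF mulr1 e1 in h.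
  apply: le_trans h.
  have -> : Mr ^+ 2 * a = (Mr * Num.sqrt a) ^+ 2 by rewrite exprMn sqr_sqrtr // ltW.
  rewrite lerXn2r // ?nnegrE ?mulr_ge0 ?sqrtr_ge0 //.
  by apply: sumr_ge0 => m _; exact: normr_ge0.
case: (pselect (exists m m' : 'I_M, m != m' /\ a - Mr^-1 <= `|G m m'|)) => // Hex.
exfalso.
set ga := a - Mr^-1.
have Hlt : forall m m', m != m' -> `|G m m'| < ga.
  move=> m m' nm; rewrite ltNge; apply/negP => h; apply: Hex; by exists m, m'.
have bnd : forall m m', s m * s m' * G m m' <= ga + (m' == m)%:R * (1 - ga).
  move=> m m'; case: (eqVneq m' m) => [->|nm].
    rewrite mul1r /G (eq_bigr (fun j => Psi m j ^+ 2)) ?HP ?hs2 ?mulr1; first by rewrite addrC subrK.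
    by move=> j _; rewrite expr2.
  rewrite mul0r addr0.
  have ns : forall k, `|s k| = 1 by move=> k; rewrite /s; case: ifP; rewrite ?normrN normr1.
  apply: (le_trans (ler_norm _)).
  rewrite normrM normrM ns ns !mul1r.
  by apply: ltW; apply: Hlt; rewrite eq_sym.
have e5 : \sum_j u j ^+ 2 <= Mr * (Mr * ga + (1 - ga)).
  apply: (@le_trans _ _ (\sum_(m < M) (Mr * ga + (1 - ga)))); last first.
    by rewrite sumr_const card_ord -mulr_natl.
  rewrite e2; apply: ler_sum => m _.
  apply: (le_trans (ler_sum _ (fun m' _ => bnd m m'))).
  rewrite big_split /= sumr_const card_ord -mulr_natl.
  by rewrite -mulr_suml (bigD1 m) //= eqxx big1 ?addr0 ?mul1r // => i /negbTE ->.
have e6 : Mr * (Mr * ga + (1 - ga)) = Mr ^+ 2 * a - Mr * a + 1.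
  rewrite /ga; field; lra.
have := le_trans e4 e5; rewrite e6; lra.
Qed.
End L3.

End M3.
Import M3.

Module M4.
Set Implicit Arguments. Unset Strict Implicit.

Local Open Scope ring_scope.

Section L4.
Variables (R : realType) (X Y : finType) (W : X -> Y -> R).
Hypothesis HW : is_channel W.

Lemma Wn_ge0 n x y : 0 <= Wn W (n:=n) x y.
Proof. by apply: prodr_ge0 => i _; exact: HW.1. Qed.

Lemma Wn_sum1 n x : \sum_y Wn W (n:=n) x y = 1.
Proof.
rewrite /Wn -(bigA_distr_bigA (fun i y => W (x i) y)) /=.
by apply: big1 => i _; exact: HW.2.
Qed.

Lemma pe_pair n M (c : 'I_M -> {ffun 'I_n -> X}) dec m m' : m != m' ->
  \sum_y Num.min (Wn W (c m) y) (Wn W (c m') y) <= Pe_m W c dec m + Pe_m W c dec m'.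
Proof.
move=> nm; rewrite /Pe_m !(big_mkcond (fun y => dec y != _)) -big_split /=.
apply: ler_sum => y _. case: (eqVneq (dec y) m) => [E|E] /=.
  have -> : (dec y != m') = true by rewrite E.
  by rewrite add0r ge_min lexx orbT.
apply: (@le_trans _ _ (Wn W (c m) y)); first by rewrite ge_min lexx.
by rewrite lerDl; case: ifP => _ //; exact: Wn_ge0.
Qed.

Lemma pe_le_max n M (c : 'I_M -> {ffun 'I_n -> X}) dec m :
  Pe_m W c dec m <= Pe_max W c dec.
Proof. exact: le_bigmax. Qed.

Lemma pe_pair_max n M (c : 'I_M -> {ffun 'I_n -> X}) dec m m' : m != m' ->
  \sum_y Num.min (Wn W (c m) y) (Wn W (c m') y) <= 2 * Pe_max W c dec.
Proof.
move=> nm; have h := pe_pair c dec nm.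
apply: (le_trans h).
have := pe_le_max c dec m; have := pe_le_max c dec m'; lra.
Qed.

End L4.

End M4.
Import M4.

Module M5.
Set Implicit Arguments. Unset Strict Implicit.

Local Open Scope ring_scope.

Section L5.
Variables (R : realType) (X Y : finType) (W : X -> Y -> R).
Hypothesis HW : is_channel W.

Lemma bhatt_tensor n (u v : {ffun 'I_n -> X}) :
  \prod_i bhatt W (u i) (v i) =
  \sum_(y : {ffun 'I_n -> Y}) \prod_i Num.sqrt (W (u i) (y i) * W (v i) (y i)).
Proof. by rewrite /bhatt bigA_distr_bigA. Qed.

Lemma minmax (a b : R) : Num.min a b * Num.max a b = a * b.
Proof.
rewrite maxr_to_min.
have : Num.min a b = a \/ Num.min a b = b.
  by rewrite /Num.min; case: ifP; [left|right].
by case=> ->; ring.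
Qed.

Lemma smin_bhatt n (u v : {ffun 'I_n -> X}) :
  (\prod_i bhatt W (u i) (v i)) ^+ 2 <=
  2 * \sum_y Num.min (Wn W u y) (Wn W v y).
Proof.
rewrite bhatt_tensor.
have Wg := HW.1.
have ht : forall y : {ffun 'I_n -> Y}, \prod_i Num.sqrt (W (u i) (y i) * W (v i) (y i)) =
   Num.sqrt (Num.min (Wn W u y) (Wn W v y)) * Num.sqrt (Num.max (Wn W u y) (Wn W v y)).
  move=> y.
  have t0 : 0 <= \prod_i Num.sqrt (W (u i) (y i) * W (v i) (y i)).
    by apply: prodr_ge0 => i _; exact: sqrtr_ge0.
  rewrite -sqrtrM; last by rewrite le_min !Wn_ge0.
  rewrite minmax -[LHS]ger0_norm // -sqrtr_sqr; congr Num.sqrt.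
  rewrite -prodrXl /Wn -big_split /=; apply: eq_bigr => i _.
  by rewrite sqr_sqrtr // mulr_ge0.
rewrite (eq_bigr _ (fun y _ => ht y)).
apply: (le_trans (@CS R _ _ _)).
rewrite [X in X * _](eq_bigr (fun y => Num.min (Wn W u y) (Wn W v y))); last first.
  by move=> y _; rewrite sqr_sqrtr // le_min !Wn_ge0.
rewrite [X in _ * X](eq_bigr (fun y => Num.max (Wn W u y) (Wn W v y))); last first.
  by move=> y _; rewrite sqr_sqrtr // le_max !Wn_ge0.
rewrite mulrC ler_wpM2r //; first by apply: sumr_ge0 => y _; rewrite le_min !Wn_ge0.
have <- : \sum_y (Wn W u y + Wn W v y) = 2 by rewrite big_split /= !Wn_sum1.
apply: ler_sum => y _; rewrite ge_max lerDl lerDr !Wn_ge0 //.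
Qed.

End L5.

End M5.
Import M5.

Module M6.
Set Implicit Arguments. Unset Strict Implicit.

Local Open Scope ring_scope.

Lemma le_sum1 (R : realType) (I : finType) (F : I -> R) i :
  (forall j, 0 <= F j) -> F i <= \sum_j F j.
Proof. by move=> h; rewrite (bigD1 i) //= lerDl sumr_ge0. Qed.

Section L6.
Variables (R : realType) (X Y : finType) (W : X -> Y -> R).
Hypothesis HW : is_channel W.

Definition cc x x' y := Num.sqrt (W x y * W x' y).
Definition LL x x' y := ln (W x' y) - ln (W x y).
Definition hh x x' (d : R) := \sum_y cc x x' y * expR (d * LL x x' y).
Definition S1 x x' := \sum_y cc x x' y * LL x x' y.
Definition K2 x x' := \sum_y cc x x' y * LL x x' y ^+ 2.

Lemma cc_ge0 x x' y : 0 <= cc x x' y.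
Proof. exact: sqrtr_ge0. Qed.

Lemma cc_pos x x' y : 0 < W x y -> 0 < W x' y ->
  cc x x' y = expR (2^-1 * (ln (W x y) + ln (W x' y))).
Proof.
move=> a b; rewrite /cc -powR12_sqrt ?mulr_ge0 ?ltW //.
by rewrite /powR gt_eqF ?mulr_gt0 // lnM.
Qed.

Lemma cc_zero x x' y : W x y = 0 \/ W x' y = 0 -> cc x x' y = 0.
Proof. by rewrite /cc; case=> ->; rewrite ?mul0r ?mulr0 sqrtr0. Qed.

Lemma Wpos_or x y : 0 < W x y \/ W x y = 0.
Proof. by have := HW.1 x y; rewrite le_eqVlt => /orP [/eqP ->|h]; [right|left]. Qed.

Lemma W_lb1 x x' y : cc x x' y * expR (- (2^-1 * LL x x' y)) <= W x y.
Proof.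
case: (Wpos_or x y) => [a|a]; last by rewrite cc_zero ?mul0r ?a; [|left].
case: (Wpos_or x' y) => [b|b]; last by rewrite cc_zero ?mul0r ?HW.1; [|right].
rewrite cc_pos // -expRD /LL.
have -> : 2^-1 * (ln (W x y) + ln (W x' y)) + - (2^-1 * (ln (W x' y) - ln (W x y))) = ln (W x y) by field.
by rewrite lnK.
Qed.

Lemma W_lb2 x x' y : cc x x' y * expR (2^-1 * LL x x' y) <= W x' y.
Proof.
case: (Wpos_or x y) => [a|a]; last by rewrite cc_zero ?mul0r ?HW.1; [|left].
case: (Wpos_or x' y) => [b|b]; last by rewrite cc_zero ?mul0r ?b; [|right].
rewrite cc_pos // -expRD /LL.
have -> : 2^-1 * (ln (W x y) + ln (W x' y)) + (2^-1 * (ln (W x' y) - ln (W x y))) = ln (W x' y) by field.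
by rewrite lnK.
Qed.

Lemma pow_id x x' y (s : R) : 0 < s < 1 ->
  W x y `^ (1 - s) * W x' y `^ s = cc x x' y * expR ((s - 2^-1) * LL x x' y).
Proof.
move=> /andP [s0 s1].
case: (Wpos_or x y) => [a|a].
  case: (Wpos_or x' y) => [b|b]; last first.
    rewrite cc_zero; last by right.
    by rewrite b mul0r /powR eqxx (gt_eqF s0) mulr0.
  rewrite cc_pos // -expRD /powR (gt_eqF a) (gt_eqF b) -expRD /LL; by congr expR; field.
rewrite cc_zero ?a ?mul0r /powR ?eqxx; last by left.
by rewrite (_ : (1 - s == 0) = false) ?mul0r //; apply/negbTE; rewrite subr_eq0 eq_sym lt_eqF.
Qed.

Lemma hh0 x x' : hh x x' 0 = bhatt W x x'.
Proof. by rewrite /hh /bhatt; apply: eq_bigr => y _; rewrite mul0r expR0 mulr1. Qed.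

Lemma hh_quad x x' d : (forall y, d * LL x x' y <= 2^-1) ->
  hh x x' d <= hh x x' 0 + d * S1 x x' + 2 * d ^+ 2 * K2 x x'.
Proof.
move=> hd.
rewrite /hh /S1 /K2 !mulr_sumr -!big_split /=; apply: ler_sum => y _.
rewrite mul0r expR0 mulr1.
apply: (le_trans (ler_wpM2l (cc_ge0 x x' y) (@exp_quad R _ (hd y)))).
by rewrite le_eqVlt; apply/orP; left; apply/eqP; ring.
Qed.

End L6.

End M6.
Import M6.

Module M7.
Set Implicit Arguments. Unset Strict Implicit.

Local Open Scope ring_scope.

Section L7.
Variables (R : realType) (X Y : finType) (W : X -> Y -> R).
Hypothesis HW : is_channel W.
Hypothesis Hrev : pairwise_reversible W.

Definition LB := \sum_x \sum_x' \sum_y `|LL W x x' y|.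
Definition d0 := (4 * (LB + 1))^-1.

Lemma LB_ge0 : 0 <= LB.
Proof. by do 3! (apply: sumr_ge0 => ? _). Qed.

Lemma LL_le x x' y : `|LL W x x' y| <= LB.
Proof.
apply: (le_trans _ (le_sum1 x _)); last by move=> j; do 2! (apply: sumr_ge0 => ? _).
apply: (le_trans _ (le_sum1 x' _)); last by move=> j; apply: sumr_ge0 => ? _.
by apply: le_sum1.
Qed.

Lemma d0_gt0 : 0 < d0.
Proof. by rewrite /d0 invr_gt0; have := LB_ge0; lra. Qed.

Lemma d0_le : d0 <= 4^-1.
Proof. rewrite /d0 lef_pV2 ?posrE; have := LB_ge0; lra. Qed.

Lemma d0LB : d0 * LB <= 4^-1.
Proof.
have := LB_ge0 => h.
rewrite /d0 ler_pdivrMl ?mulr_gt0 //; try lra.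
Qed.

Lemma small d x x' y : `|d| <= d0 -> d * LL W x x' y <= 2^-1.
Proof.
move=> hd; apply: (le_trans (ler_norm _)); rewrite normrM.
apply: (le_trans (y := d0 * LB)); last by have := d0LB; lra.
by apply: ler_pM => //; exact: LL_le.
Qed.

Lemma rev_hh x x' d : `|d| <= d0 -> hh W x x' 0 <= hh W x x' d.
Proof.
move=> hd.
have hd' : `|d| <= 4^-1 by apply: le_trans hd d0_le.
have := Hrev x x' (s := 2^-1 + d).
have hs : 0 <= 2^-1 + d <= 1 by move: hd'; rewrite ler_norml; lra.
move=> /(_ hs).
rewrite (eq_bigr (fun y => cc W x x' y * expR ((2^-1 - 2^-1) * LL W x x' y))); last first.
  by move=> y _; apply: pow_id => //; lra.
rewrite [X in _ <= X -> _](eq_bigr (fun y => cc W x x' y * expR ((2^-1 + d - 2^-1) * LL W x x' y))); last first.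
  by move=> y _; apply: pow_id => //; move: hd'; rewrite ler_norml; lra.
by rewrite subrr addrAC subrr add0r.
Qed.


Lemma K2_ge0 x x' : 0 <= K2 W x x'.
Proof. by apply: sumr_ge0 => y _; rewrite mulr_ge0 ?sqr_ge0 ?cc_ge0. Qed.

Lemma hh0_ge0 x x' : 0 <= hh W x x' 0.
Proof. by apply: sumr_ge0 => y _; rewrite mulr_ge0 ?expR_ge0 ?cc_ge0. Qed.

Lemma quad_small x x' d : `|d| <= d0 ->
  hh W x x' d <= hh W x x' 0 + d * S1 W x x' + 2 * d ^+ 2 * K2 W x x'.
Proof. by move=> hd; apply: hh_quad => y; exact: small. Qed.

Lemma S1_0 x x' : S1 W x x' = 0.
Proof.
set s1 := S1 W x x'; set k := K2 W x x'.
have k0 : 0 <= k by exact: K2_ge0.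
set D := `|s1| + 2 * k + 1.
have D0 : 0 < D by rewrite /D; have := normr_ge0 s1; lra.
set eta := d0 / D.
have eta0 : 0 < eta by rewrite /eta divr_gt0 // d0_gt0.
have etaD : eta * D = d0 by rewrite /eta mulfVK // gt_eqF.
set d := - s1 * eta.
have hd : `|d| <= d0.
  rewrite /d normrM normrN (gtr0_norm eta0) -etaD mulrC ler_pM2l //.
  by rewrite /D; lra.
have h1 := rev_hh x x' hd.
have h2 := quad_small x x' hd.
rewrite -/s1 -/k in h2.
have h3 : 0 <= d * s1 + 2 * d ^+ 2 * k by lra.
have e : d * s1 + 2 * d ^+ 2 * k = s1 ^+ 2 * (eta * (2 * eta * k - 1)) by rewrite /d; ring.
rewrite e in h3.
have ek : 2 * eta * k < 1.
  have : eta * (2 * k + 1) <= 4^-1.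
    apply: (le_trans _ d0_le); rewrite -etaD ler_pM2l // /D.
    by have := normr_ge0 s1; lra.
  move=> h; nra.
have t0 : eta * (2 * eta * k - 1) < 0 by rewrite pmulr_rlt0 //; lra.
have : s1 ^+ 2 <= 0 by nra.
by move=> h; apply/eqP; rewrite -sqrf_eq0 eq_le h sqr_ge0.
Qed.


Definition Cst := \sum_x \sum_x' 2 * K2 W x x' / hh W x x' 0.

Lemma term_ge0 x x' : 0 <= 2 * K2 W x x' / hh W x x' 0.
Proof. by rewrite divr_ge0 ?mulr_ge0 ?K2_ge0 ?hh0_ge0. Qed.

Lemma Cst_ge0 : 0 <= Cst.
Proof. by apply: sumr_ge0 => x _; apply: sumr_ge0 => x' _; exact: term_ge0. Qed.

Lemma K2_le x x' : 2 * K2 W x x' <= Cst * hh W x x' 0.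
Proof.
have := hh0_ge0 x x'; rewrite le_eqVlt => /orP [/eqP h0|hp].
  have c0 : forall y, cc W x x' y = 0.
    move=> y.
    have nn : forall i, xpredT i -> 0 <= cc W x x' i * expR (0 * LL W x x' i).
      by move=> i _; rewrite mulr_ge0 ?expR_ge0 ?cc_ge0.
    have := @psumr_eq0P R Y xpredT (fun y => cc W x x' y * expR (0 * LL W x x' y)) nn (esym h0) y isT.
    by rewrite mul0r expR0 mulr1.
  rewrite -h0 mulr0 /K2 big1 ?mulr0 // => y _; by rewrite c0 mul0r.
rewrite -ler_pdivrMr //.
apply: (le_trans _ (le_sum1 x _)); last by move=> j; apply: sumr_ge0 => ? _; exact: term_ge0.
by apply: (le_trans _ (le_sum1 x' _)) => // j; exact: term_ge0.
Qed.

Lemma hh_final x x' d : `|d| <= d0 -> hh W x x' d <= hh W x x' 0 * (1 + d ^+ 2 * Cst).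
Proof.
move=> hd; have := quad_small x x' hd; rewrite S1_0 mulr0 addr0 => h.
apply: (le_trans h); rewrite mulrDr mulr1 lerD2l.
have := K2_le x x'; have := sqr_ge0 d => h1 h2.
rewrite (_ : 2 * d ^+ 2 * K2 W x x' = d ^+ 2 * (2 * K2 W x x')); last by ring.
rewrite (_ : hh W x x' 0 * (d ^+ 2 * Cst) = d ^+ 2 * (Cst * hh W x x' 0)); last by ring.
by rewrite ler_wpM2l.
Qed.

End L7.

End M7.
Import M7.

Module M8.
Set Implicit Arguments. Unset Strict Implicit.

Local Open Scope ring_scope.

Section L8.
Variables (R : realType) (X Y : finType) (W : X -> Y -> R).
Hypothesis HW : is_channel W.
Variables (n : nat) (u v : {ffun 'I_n -> X}).

Definition tt (y : {ffun 'I_n -> Y}) := \prod_i cc W (u i) (v i) (y i).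
Definition Lam (y : {ffun 'I_n -> Y}) := \sum_i LL W (u i) (v i) (y i).
Definition HH d := \sum_y tt y * expR (d * Lam y).

Lemma tt_ge0 y : 0 <= tt y.
Proof. by apply: prodr_ge0 => i _; exact: cc_ge0. Qed.

Lemma prod_ce (f : 'I_n -> R) (y : {ffun 'I_n -> Y}) :
  \prod_i (cc W (u i) (v i) (y i) * expR (f i)) = tt y * expR (\sum_i f i).
Proof. by rewrite big_split /= expR_sum. Qed.

Lemma HH_prod d : HH d = \prod_i hh W (u i) (v i) d.
Proof.
rewrite /hh bigA_distr_bigA /HH; apply: eq_bigr => y _.
by rewrite prod_ce /Lam mulr_sumr.
Qed.

Lemma HH0 : HH 0 = \prod_i bhatt W (u i) (v i).
Proof. by rewrite HH_prod; apply: eq_bigr => i _; exact: hh0. Qed.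

Lemma P_lb y : tt y * expR (- (2^-1 * Lam y)) <= Wn W u y.
Proof.
rewrite /Lam mulr_sumr -sumrN -prod_ce /Wn; apply: ler_prod => i _.
by rewrite mulr_ge0 ?cc_ge0 ?expR_ge0 //= W_lb1.
Qed.

Lemma Q_lb y : tt y * expR (2^-1 * Lam y) <= Wn W v y.
Proof.
rewrite /Lam mulr_sumr -prod_ce /Wn; apply: ler_prod => i _.
by rewrite mulr_ge0 ?cc_ge0 ?expR_ge0 //= W_lb2.
Qed.

Lemma pointwise (T d : R) y : 0 <= T -> 0 <= d ->
  tt y * expR (- (T / 2)) <= Num.min (Wn W u y) (Wn W v y) +
    tt y * expR (- (T / 2)) * (expR (- (d * T)) * (expR (d * Lam y) + expR ((- d) * Lam y))).
Proof.
move=> T0 d0.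
have t0 := tt_ge0 y.
set A := tt y * expR (- (T / 2)).
have A0 : 0 <= A by rewrite mulr_ge0 ?expR_ge0.
have P0 := Wn_ge0 HW u y; have Q0 := Wn_ge0 HW v y.
have m0 : 0 <= Num.min (Wn W u y) (Wn W v y) by rewrite le_min P0 Q0.
have B0 : 0 <= expR (- (d * T)) * (expR (d * Lam y) + expR ((- d) * Lam y)).
  by rewrite mulr_ge0 ?addr_ge0 ?expR_ge0.
have big1 : forall Z, 1 <= Z -> A <= A * Z.
  by move=> Z hZ; rewrite ler_peMr.
case: (lerP (Lam y) T) => h1; last first.
  suff hZ : 1 <= expR (- (d * T)) * (expR (d * Lam y) + expR ((- d) * Lam y)).
    by have := big1 _ hZ; lra.
  rewrite mulrDr; have : 0 <= expR (- (d * T)) * expR ((- d) * Lam y) by rewrite mulr_ge0 ?expR_ge0.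
  suff : 1 <= expR (- (d * T)) * expR (d * Lam y) by lra.
  rewrite -expRD -expR0 ler_expR; nra.
case: (lerP (- T) (Lam y)) => h2; last first.
  suff hZ : 1 <= expR (- (d * T)) * (expR (d * Lam y) + expR ((- d) * Lam y)).
    by have := big1 _ hZ; lra.
  rewrite mulrDr; have : 0 <= expR (- (d * T)) * expR (d * Lam y) by rewrite mulr_ge0 ?expR_ge0.
  suff : 1 <= expR (- (d * T)) * expR ((- d) * Lam y) by lra.
  rewrite -expRD -expR0 ler_expR; nra.
suff hA : A <= Num.min (Wn W u y) (Wn W v y).
  have : 0 <= A * (expR (- (d * T)) * (expR (d * Lam y) + expR ((- d) * Lam y))) by rewrite mulr_ge0.
  lra.
rewrite le_min; apply/andP; split.
  apply: le_trans (P_lb y); rewrite ler_wpM2l // ler_expR; lra.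
apply: le_trans (Q_lb y); rewrite ler_wpM2l // ler_expR; lra.
Qed.

End L8.

Section L8b.
Variables (R : realType) (X Y : finType) (W : X -> Y -> R).
Hypothesis HW : is_channel W.
Hypothesis Hrev : pairwise_reversible W.
Variables (n : nat) (u v : {ffun 'I_n -> X}).

Lemma sum_bound (T d : R) : 0 <= T -> 0 <= d ->
  expR (- (T / 2)) * HH W u v 0 <= \sum_y Num.min (Wn W u y) (Wn W v y) +
    expR (- (T / 2)) * expR (- (d * T)) * (HH W u v d + HH W u v (- d)).
Proof.
move=> T0 d0.
have : \sum_y tt W u v y * expR (- (T / 2)) <= \sum_y (Num.min (Wn W u y) (Wn W v y) +
    tt W u v y * expR (- (T / 2)) * (expR (- (d * T)) * (expR (d * Lam W u v y) + expR ((- d) * Lam W u v y)))).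
  by apply: ler_sum => y _; exact: pointwise.
rewrite big_split /=.
have -> : \sum_y tt W u v y * expR (- (T / 2)) = expR (- (T / 2)) * HH W u v 0.
  by rewrite /HH mulr_sumr; apply: eq_bigr => y _; rewrite mul0r expR0 mulr1 mulrC.
have -> : \sum_y tt W u v y * expR (- (T / 2)) * (expR (- (d * T)) * (expR (d * Lam W u v y) + expR (- d * Lam W u v y)))
   = expR (- (T / 2)) * expR (- (d * T)) * (HH W u v d + HH W u v (- d)).
  by rewrite /HH -big_split mulr_sumr; apply: eq_bigr => y _ /=; ring.
by [].
Qed.

Lemma HH_bound d : `|d| <= d0 W -> HH W u v d <= HH W u v 0 * expR (n%:R * (d ^+ 2 * Cst W)).
Proof.
move=> hd; rewrite !HH_prod.
apply: (@le_trans _ _ (\prod_i (hh W (u i) (v i) 0 * (1 + d ^+ 2 * Cst W)))).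
  apply: ler_prod => i _; apply/andP; split; last by apply: hh_final.
  by apply: sumr_ge0 => y _; rewrite mulr_ge0 ?expR_ge0 ?cc_ge0.
rewrite big_split /= prodr_const card_ord ler_wpM2l //.
  by apply: prodr_ge0 => i _; exact: hh0_ge0.
rewrite expRM_natl; apply: lerXn2r; rewrite ?nnegrE ?expR_ge0 ?expR_ge1Dx //.
apply: addr_ge0 => //; apply: mulr_ge0; [exact: sqr_ge0 | exact: Cst_ge0].
Qed.

Lemma rev_smin (T d : R) : 0 <= T -> 0 <= d -> d <= d0 W ->
  expR (- (T / 2)) * (\prod_i bhatt W (u i) (v i)) *
     (1 - 2 * (expR (- (d * T)) * expR (n%:R * (d ^+ 2 * Cst W))))
  <= \sum_y Num.min (Wn W u y) (Wn W v y).
Proof.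
move=> T0 dp dd.
have h := sum_bound T0 dp.
have h1 := HH_bound (d := d); have h2 := HH_bound (d := - d).
rewrite normrN ger0_norm // in h2; have {h2} h2 := h2 dd.
rewrite ger0_norm // in h1; have {h1} h1 := h1 dd.
rewrite sqrrN in h2.
rewrite -HH0.
set E := expR (- (T / 2)); set F := expR (- (d * T)); set G := expR (n%:R * (d ^+ 2 * Cst W)).
set B := HH W u v 0.
have E0 : 0 <= E by exact: expR_ge0.
have F0 : 0 <= F by exact: expR_ge0.
rewrite -/B -/G in h1 h2.
rewrite -/E -/F -/B in h.
have : E * F * (HH W u v d + HH W u v (- d)) <= E * F * (2 * (B * G)).
  by rewrite ler_wpM2l ?mulr_ge0 //; lra.
move=> h3.
have -> : E * B * (1 - 2 * (F * G)) = E * B - E * F * (2 * (B * G)) by ring.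
lra.
Qed.

End L8b.

End M8.
Import M8.

Module M9.
Set Implicit Arguments. Unset Strict Implicit.

Local Open Scope ring_scope.

Lemma powR_prod (R : realType) (I : finType) (b : I -> R) r : (forall i, 0 <= b i) ->
  \prod_i (b i `^ r) = (\prod_i b i) `^ r.
Proof.
move=> hb.
have H := @big_rec2 R R (fun x y => x = y `^ r /\ 0 <= y) 1 *%R 1 *%R.
have := H _ I (index_enum I) (fun _ => true) (fun i => b i `^ r) b.
case.
- by rewrite powR1.
- by move=> i y1 y2 _ [-> y0]; split; [rewrite powRM | exact: mulr_ge0].
- by move=> ->.
Qed.

Section L9.
Variables (R : realType) (X Y : finType) (W : X -> Y -> R).
Hypothesis HW : is_channel W.

Lemma loginvsq_bound (a V : R) : (loginvsq a <= V%:E)%E -> expR (- V) <= a ^+ 2.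
Proof.
rewrite /loginvsq; case: eqP => // a0; rewrite lee_fin => h.
have a2 : 0 < a ^+ 2 by rewrite lt_neqAle sqr_ge0 andbT eq_sym sqrf_eq0; apply/eqP.
by rewrite -(lnK a2) ler_expR; lra.
Qed.


Lemma bhatt_ge0 x x' : 0 <= bhatt W x x'.
Proof. by apply: sumr_ge0 => y _; exact: sqrtr_ge0. Qed.

Lemma pair_exists (rho : R) (d : nat) (psi : X -> 'I_d -> R) (f : 'I_d -> R) (V : R)
  n M (c : 'I_M -> {ffun 'I_n -> X}) :
  0 < rho -> ortho_rep W rho psi -> dotv f f = 1 ->
  (forall x, (loginvsq (dotv (psi x) f) <= V%:E)%E) ->
  2 <= M%:R * expR (- (n%:R * V)) ->
  exists m m' : 'I_M, m != m' /\
    expR (- (rho * (n%:R * V + ln 2))) <= \prod_i bhatt W (c m i) (c m' i).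
Proof.
move=> r0 [hn hb] hf hV hM.
set a := expR (- (n%:R * V)).
have a0 : 0 < a by exact: expR_gt0.
rewrite -/a in hM.
pose Psi := fun (m : 'I_M) (j : {ffun 'I_n -> 'I_d}) => \prod_i psi (c m i) (j i).
pose F := fun (j : {ffun 'I_n -> 'I_d}) => \prod_i f (j i).
have tens := @tensor R 'I_n 'I_d.
have e1 : \sum_j F j ^+ 2 = 1.
  rewrite (eq_bigr (fun j => F j * F j)); last by move=> j _; rewrite expr2.
  by rewrite /F (tens (fun _ => f) (fun _ => f)); apply: big1 => i _; exact: hf.
have e2 : forall m, \sum_j Psi m j ^+ 2 = 1.
  move=> m; rewrite (eq_bigr (fun j => Psi m j * Psi m j)); last by move=> j _; rewrite expr2.
  by rewrite /Psi (tens (fun i => psi (c m i)) (fun i => psi (c m i))); apply: big1 => i _; exact: hn.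
have e3 : forall m, a <= (\sum_j Psi m j * F j) ^+ 2.
  move=> m; rewrite /Psi /F (tens (fun i => psi (c m i)) (fun _ => f)) -prodrXl.
  apply: (@le_trans _ _ (\prod_(i < n) expR (- V))).
    rewrite prodr_const card_ord /a -expRM_natl mulrN. exact: lexx.
  apply: ler_prod => i _; rewrite expR_ge0 /=; exact: loginvsq_bound (hV _).
have hM1 : 1 < M%:R * a by lra.
have [m [m' [nm hG]]] := @gram R _ M Psi F a e1 e2 e3 hM1.
exists m, m'; split => //.
have Mp : 0 < M%:R :> R.
  rewrite lt_neqAle ler0n andbT; apply/negP => /eqP E; move: hM; rewrite -E mul0r; lra.
have hw : M%:R^-1 <= a / 2.
  have Mi : 0 < M%:R^-1 :> R by rewrite invr_gt0.
  have := ler_wpM2l (ltW Mi) hM; rewrite mulrA mulVf ?gt_eqF // mul1r; lra.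
set B := \prod_i bhatt W (c m i) (c m' i).
have B0 : 0 <= B by apply: prodr_ge0 => i _; exact: bhatt_ge0.
have hB : a / 2 <= B `^ rho^-1.
  apply: (@le_trans _ _ (a - M%:R^-1)); first lra.
  apply: (le_trans hG).
  rewrite /Psi (tens (fun i => psi (c m i)) (fun i => psi (c m' i))) normr_prod.
  rewrite /B -powR_prod; last by move=> i; exact: bhatt_ge0.
  by apply: ler_prod => i _; rewrite normr_ge0 /=; exact: hb.
have : (a / 2) `^ rho <= (B `^ rho^-1) `^ rho.
  apply: ge0_ler_powR; [exact: ltW | | by rewrite nnegrE powR_ge0 | exact: hB].
  by rewrite nnegrE; apply: divr_ge0; [exact: ltW|].
rewrite -powRrM mulVf ?gt_eqF // powRr1 //.
suff -> : (a / 2) `^ rho = expR (- (rho * (n%:R * V + ln 2))) by [].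
rewrite /powR gt_eqF ?divr_gt0 // ln_div ?posrE // /a expRK; congr expR; ring.
Qed.

End L9.

End M9.
Import M9.

Module M10.
Set Implicit Arguments. Unset Strict Implicit.

Local Open Scope classical_set_scope.
Local Open Scope ring_scope.

Lemma eventually_ge (R : realType) (K c : R) : 0 < c ->
  exists N, forall n, (N <= n)%N -> K <= n%:R * c.
Proof.
move=> c0; exists (Num.trunc (K / c)).+1 => n hn.
have h1 := truncnS_gt (K / c).
have h2 : (Num.trunc (K / c)).+1%:R <= n%:R :> R by rewrite ler_nat.
rewrite -ler_pdivrMr //; lra.
Qed.

Section L10.
Variables (R : realType) (X Y : finType) (W : X -> Y -> R).
Hypothesis HX : (0 < #|X|)%N.

Lemma rel_le (Rt b : R) :
 (forall e : R, 0 < e -> exists N, forall n, (N <= n)%N -> forall M (c : 'I_M -> {ffun 'I_n -> X}) dec,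
    (0 < M)%N -> Rt <= ln M%:R / n%:R -> expR (- (n%:R * (b + e))) <= Pe_max W c dec) ->
 (reliability W Rt <= b%:E)%E.
Proof.
move=> H; rewrite /reliability; apply: limsup_le => e e0.
have [N HN] := H e e0; exists N.+1 => n hn.
have n0 : 0 < n%:R :> R by rewrite ltr0n; apply: leq_trans hn.
have [x0 _] := card_gt0P HX.
set lb := expR (- (n%:R * (b + e))).
have hne : [set p : R | exists M : nat, exists (c : 'I_M -> {ffun 'I_n -> X})
        (dec : {ffun 'I_n -> Y} -> 'I_M),
        (0 < M)%N /\ Rt <= ln (M%:R) / n%:R /\ p = Pe_max W c dec] !=set0.
  set k := Num.trunc (expR (n%:R * Rt)).
  exists (Pe_max W (fun _ : 'I_k.+1 => [ffun _ : 'I_n => x0]) (fun _ : {ffun 'I_n -> Y} => ord0)).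
  exists k.+1, (fun _ => [ffun _ : 'I_n => x0]), (fun _ : {ffun 'I_n -> Y} => ord0); split => //; split => //.
  rewrite ler_pdivlMr // -(expRK (Rt * n%:R)) ler_ln ?posrE ?expR_gt0 ?ltr0n //.
  by rewrite mulrC; apply: ltW; exact: truncnS_gt.
have hlb : lbound [set p : R | exists M : nat, exists (c : 'I_M -> {ffun 'I_n -> X})
        (dec : {ffun 'I_n -> Y} -> 'I_M),
        (0 < M)%N /\ Rt <= ln (M%:R) / n%:R /\ p = Pe_max W c dec] lb.
  move=> p [M [c [dec [M0 [hR ->]]]]]; apply: HN => //; exact: ltnW.
have hP : lb <= Pemax_opt W n Rt := lb_le_inf hne hlb.
have Pp : 0 < Pemax_opt W n Rt by apply: lt_le_trans hP; exact: expR_gt0.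
rewrite (gt_eqF Pp) lee_fin ler_pdivrMr //.
have : ln lb <= ln (Pemax_opt W n Rt) by rewrite ler_ln ?posrE ?expR_gt0.
rewrite /lb expRK; lra.
Qed.

End L10.

End M10.
Import M10.

Module M11.
Set Implicit Arguments. Unset Strict Implicit.

Local Open Scope classical_set_scope.
Local Open Scope ring_scope.

Section L11.
Variables (R : realType) (X Y : finType) (W : X -> Y -> R).
Hypothesis HX : (0 < #|X|)%N.
Hypothesis HW : is_channel W.

Lemma M_ge n M (Rt : R) : (0 < M)%N -> Rt <= ln M%:R / n%:R -> 0 < n%:R :> R ->
  expR (n%:R * Rt) <= M%:R.
Proof.
move=> M0 hR n0.
have Mp : 0 < M%:R :> R by rewrite ltr0n.
rewrite -(lnK Mp) ler_expR; move: hR; rewrite ler_pdivlMr // => h; nra.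
Qed.

Lemma part1_V (rho : R) d (psi : X -> 'I_d -> R) f V Rt : 1 <= rho ->
  ortho_rep W rho psi -> dotv f f = 1 ->
  (forall x, (loginvsq (dotv (psi x) f) <= V%:E)%E) -> V < Rt ->
  (reliability W Rt <= (2 * rho * V)%:E)%E.
Proof.
move=> r1 hrep hf hV VR.
have r0 : 0 < rho by lra.
have l20 : 0 < ln 2 :> R by rewrite ln_gt0 //; lra.
have l40 : 0 < ln 4 :> R by rewrite ln_gt0 //; lra.
apply: rel_le => // e e0.
have RV : 0 < Rt - V by lra.
have [N1 H1] := eventually_ge (ln 2) RV.
have [N2 H2] := eventually_ge (2 * rho * ln 2 + ln 4) e0.
exists (maxn N1 N2) => n hn M c dec M0 hR.
have h1 := H1 n (leq_trans (leq_maxl _ _) hn).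
have h2 := H2 n (leq_trans (leq_maxr _ _) hn).
have n0 : 0 < n%:R :> R.
  rewrite lt_neqAle ler0n andbT; apply/negP => /eqP E; move: h1; rewrite -E mul0r; lra.
have hM : 2 <= M%:R * expR (- (n%:R * V)).
  apply: (@le_trans _ _ (expR (n%:R * Rt) * expR (- (n%:R * V)))).
    rewrite -expRD -[X in X <= _](lnK (_ : 0 < 2)) ?ler_expR //; lra.
  by rewrite ler_wpM2r ?expR_ge0 // M_ge.
have [m [m' [nm hB]]] := pair_exists c r0 hrep hf hV hM.
have hs := smin_bhatt HW (c m) (c m').
have hp := pe_pair_max HW c dec nm.
set B := \prod_i bhatt W (c m i) (c m' i) in hB hs.
set E0 := expR (- (rho * (n%:R * V + ln 2))) in hB.
have E00 : 0 <= E0 by exact: expR_ge0.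
have hB2 : E0 ^+ 2 <= B ^+ 2 by rewrite lerXn2r // nnegrE (le_trans E00 hB).
have hE : expR (- (n%:R * (2 * rho * V + e))) <= E0 ^+ 2 / 4.
  rewrite /E0 -expRM_natl (_ : 4 = expR (ln 4)); last by rewrite lnK // posrE.
  rewrite -expRB ler_expR.
  have -> : - (n%:R * (2 * rho * V + e)) = 2%:R * - (rho * (n%:R * V + ln 2)) - ln 4
                - (n%:R * e - (2 * rho * ln 2 + ln 4)) by ring.
  lra.
lra.
Qed.


Lemma part2_V (rho : R) d (psi : X -> 'I_d -> R) f V Rt : pairwise_reversible W -> 1 <= rho ->
  ortho_rep W rho psi -> dotv f f = 1 ->
  (forall x, (loginvsq (dotv (psi x) f) <= V%:E)%E) -> V < Rt ->
  (reliability W Rt <= (rho * V)%:E)%E.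
Proof.
move=> Hrev r1 hrep hf hV VR.
have r0 : 0 < rho by lra.
have l20 : 0 < ln 2 :> R by rewrite ln_gt0 //; lra.
have l40 : 0 < ln 4 :> R by rewrite ln_gt0 //; lra.
apply: rel_le => // e e0.
set C := Cst W.
have C0 : 0 <= C by exact: Cst_ge0.
have dd0 := d0_gt0 W.
set dl := Num.min (d0 W) (e / (4 * C + 1)).
have ec : 0 < e / (4 * C + 1) by rewrite divr_gt0 //; lra.
have dl0 : 0 < dl by rewrite lt_min dd0 ec.
have dld : dl <= d0 W by rewrite ge_min lexx.
have dlC : dl * C <= e / 4.
  have h : dl <= e / (4 * C + 1) by rewrite ge_min lexx orbT.
  have : dl * (4 * C + 1) <= e by rewrite -ler_pdivlMr //; lra.
  nra.
have RV : 0 < Rt - V by lra.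
have [N1 H1] := eventually_ge (ln 2) RV.
have de0 : 0 < dl * e / 2 by rewrite divr_gt0 ?mulr_gt0.
have [N2 H2] := eventually_ge (ln 4) de0.
have e20 : 0 < e / 2 by rewrite divr_gt0.
have [N3 H3] := eventually_ge (rho * ln 2 + ln 4) e20.
exists (maxn N1 (maxn N2 N3)) => n hn M c dec M0 hR.
have h1 := H1 n (leq_trans (leq_maxl _ _) hn).
have h2 := H2 n (leq_trans (leq_maxl _ _) (leq_trans (leq_maxr _ _) hn)).
have h3 := H3 n (leq_trans (leq_maxr _ _) (leq_trans (leq_maxr _ _) hn)).
have n0 : 0 < n%:R :> R.
  rewrite lt_neqAle ler0n andbT; apply/negP => /eqP E; move: h1; rewrite -E mul0r; lra.
have hM : 2 <= M%:R * expR (- (n%:R * V)).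
  apply: (@le_trans _ _ (expR (n%:R * Rt) * expR (- (n%:R * V)))).
    rewrite -expRD -[X in X <= _](lnK (_ : 0 < 2)) ?ler_expR //; lra.
  by rewrite ler_wpM2r ?expR_ge0 // M_ge.
have [m [m' [nm hB]]] := pair_exists c r0 hrep hf hV hM.
set T := n%:R * e.
have T0 : 0 <= T by rewrite mulr_ge0 // ltW.
have hs := rev_smin HW Hrev (c m) (c m') T0 (ltW dl0) dld.
have hp := pe_pair_max HW c dec nm.
set B := \prod_i bhatt W (c m i) (c m' i) in hB hs.
set E0 := expR (- (rho * (n%:R * V + ln 2))) in hB.
have E00 : 0 <= E0 by exact: expR_ge0.
have hQ : expR (- (dl * T)) * expR (n%:R * (dl ^+ 2 * C)) <= 4^-1.
  rewrite -expRD (_ : 4^-1 = expR (- ln 4)); last by rewrite expRN lnK // posrE.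
  rewrite ler_expR.
  have -> : - (dl * T) + n%:R * (dl ^+ 2 * C) = - (n%:R * (dl * e / 2)) - n%:R * dl * (e / 2 - dl * C).
    by rewrite /T; nra.
  have : 0 <= n%:R * dl * (e / 2 - dl * C) by rewrite mulr_ge0 ?mulr_ge0 // ?ltW //; lra.
  lra.
set Q := expR (- (dl * T)) * expR (n%:R * (dl ^+ 2 * C)) in hs hQ.
set G := expR (- (T / 2)) in hs.
have G0 : 0 <= G by exact: expR_ge0.
have GB : G * E0 <= G * B by rewrite ler_wpM2l.
have hs2 : G * B / 2 <= G * B * (1 - 2 * Q).
  rewrite ler_wpM2l ?mulr_ge0 ?(le_trans E00 hB) //; lra.
have hE : expR (- (n%:R * (rho * V + e))) <= G * E0 / 4.
  rewrite /G /E0 -expRD (_ : 4 = expR (ln 4)); last by rewrite lnK // posrE.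
  rewrite -expRB ler_expR /T.
  have -> : - (n%:R * (rho * V + e)) = - (n%:R * e / 2) + - (rho * (n%:R * V + ln 2)) - ln 4
                - (n%:R * (e / 2) - (rho * ln 2 + ln 4)) by field.
  lra.
lra.
Qed.

End L11.

End M11.
Import M11.

Module M12.
Set Implicit Arguments. Unset Strict Implicit.

Local Open Scope classical_set_scope.
Local Open Scope ring_scope.

Section L12.
Variables (R : realType) (X Y : finType) (W : X -> Y -> R).
Hypothesis HX : (0 < #|X|)%N.

Lemma loginvsq_ge0 d (u f : 'I_d -> R) : dotv u u = 1 -> dotv f f = 1 ->
  (0 <= loginvsq (dotv u f))%E.
Proof.
move=> hu hf; rewrite /loginvsq; case: ifP => _ //; rewrite lee_fin oppr_ge0.
apply: ln_le0.
have h := @CS R 'I_d u f.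
have e1 : \sum_i u i ^+ 2 = dotv u u by rewrite /dotv; apply: eq_bigr => i _; rewrite expr2.
have e2 : \sum_i f i ^+ 2 = dotv f f by rewrite /dotv; apply: eq_bigr => i _; rewrite expr2.
rewrite e1 e2 hu hf mulr1 in h; exact: h.
Qed.

Lemma from_V (rho k Rt : R) : 0 < k ->
  (forall d (psi : X -> 'I_d -> R) f V, ortho_rep W rho psi -> dotv f f = 1 ->
     (forall x, (loginvsq (dotv (psi x) f) <= V%:E)%E) -> V < Rt ->
     (reliability W Rt <= (k * V)%:E)%E) ->
  (vartheta W rho < Rt%:E)%E -> (reliability W Rt <= k%:E * vartheta W rho)%E.
Proof.
move=> k0 H hR.
have th0 : (0 <= vartheta W rho)%E.
  apply/ereal_infP => v [d [psi [[hn hb] ->]]].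
  rewrite /Vrep; apply/ereal_infP => w [f [hf ->]].
  have [x0 _] := card_gt0P HX.
  apply: le_trans (le_bigmax _ _ x0).
  exact: loginvsq_ge0.
case E: (vartheta W rho) th0 hR => [r | |] //= r0 rR.
rewrite -EFinM; apply/lee_addgt0Pr => e e0.
rewrite lee_fin in r0; rewrite lte_fin in rR.
set eta := Num.min ((Rt - r) / 2) (e / k).
have eta0 : 0 < eta by rewrite lt_min !divr_gt0 //; lra.
have eta1 : eta <= (Rt - r) / 2 by rewrite ge_min lexx.
have eta2 : eta <= e / k by rewrite ge_min lexx orbT.
have hlt : (vartheta W rho < (r + eta)%:E)%E by rewrite E lte_fin; lra.
have [v [d [psi [hrep ->]]] hv] := ereal_inf_lt hlt.
have [w [f [hf ->]] hw] := ereal_inf_lt hv.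
have hV : forall x, (loginvsq (dotv (psi x) f) <= (r + eta)%:E)%E.
  move=> x; apply: le_trans (ltW hw); exact: le_bigmax.
have hlt2 : r + eta < Rt by lra.
have h := H d psi f (r + eta) hrep hf hV hlt2.
apply: le_trans h _.
by rewrite -EFinD lee_fin mulrDr lerD2l -ler_pdivlMl // mulrC.
Qed.

End L12.

End M12.
Import M12.

Unset Implicit Arguments.
Local Open Scope ring_scope.

Theorem corollary1 (R : realType) (X Y : finType) (W : X -> Y -> R)
  (HX : (0 < #|X|)%N) (HW : is_channel W) (rho : R) (Hrho : 1 <= rho) :
  (forall Rt : R, (vartheta W rho < Rt%:E)%E ->
     (reliability W Rt <= (2 * rho)%:E * vartheta W rho)%E) /\
  (pairwise_reversible W ->
   forall Rt : R, (vartheta W rho < Rt%:E)%E ->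
     (reliability W Rt <= rho%:E * vartheta W rho)%E).
Proof.
split.
- move=> Rt hR; apply: (from_V HX) => //; first by lra.
  by move=> d psi f V h1 h2 h3 h4; apply: (part1_V HX HW Hrho h1 h2 h3 h4).
- move=> Hrev Rt hR; apply: (from_V HX) => //; first by lra.
  by move=> d psi f V h1 h2 h3 h4; apply: (part2_V HX HW Hrev Hrho h1 h2 h3 h4).
Qed.
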